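(* Let $l\ge 1$. For each $n\in[1,\infty]$ let $Y^n=\{Y^n_z:z\in\mathbb Z^2\}$ be a collection of Bernoulli random variables which is $l$-dependent, i.e. $\{Y^n_z:z\in A\}$ and $\{Y^n_z:z\in B\}$ are independent whenever $d_\infty(A,B)=\min\{|z-z'|_\infty:z\in A,z'\in B\}\ge l$. Let $\phi=\inf_{n}\inf_{z\in\mathbb Z^2}\mathbb P(Y^n_z=1)$. Then there exists $p_0\in(0,1)$ (depending on $l$) such that if $\phi>p_0$, then for every $k\ge1$ there exist $b_3,b_4>0$ such that for all $n\in[1,\infty]$ and all $s\ge 1$, $$\mathbb P(m^k_s(Y^n)<b_3 s)\le e^{-b_4 s}.$$
   Context: A lattice animal is a connected (nearest-neighbour) finite subset of $\mathbb Z^2$ containing the origin; $\Phi_s$ is the set of lattice animals with at least $s$ sites. For an animal $A$ and $k\ge1$, $\Xi^k_A$ is the set of subsets $B\subseteq A$ such that $|z-\bar z|_\infty\ge k$ for all distinct $z,\bar z\in B$. Define $m^k(A,Y^n)=\max\{\sum_{z\in B}Y^n_z:B\in\Xi^k_A\}$ and $m^k_s(Y^n)=\min\{m^k(A,Y^n):A\in\Phi_s\}$. *)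

(* Defs.v *)
From HB Require Import structures.
From mathcomp Require Import all_boot all_order all_algebra.
From mathcomp Require Import finmap.
From mathcomp Require Import all_classical all_reals all_analysis.
Set Implicit Arguments. Unset Strict Implicit. Unset Printing Implicit Defensive.
Import Order.TTheory GRing.Theory Num.Theory.
Local Open Scope classical_set_scope.
Local Open Scope ring_scope.

Definition site := (int * int)%type.

Definition distI (z w : site) : nat := maxn `|z.1 - w.1|%N `|z.2 - w.2|%N.

Definition adjacent (z w : site) : bool := (`|z.1 - w.1|%N + `|z.2 - w.2|%N == 1)%N.

Definition lattice_animal (A : {fset site}) : Prop :=
  ((0, 0) : site) \in A /\
  forall x y, x \in A -> y \in A ->
    exists p : seq site, [/\ path adjacent x p, last x p = y & all (fun z => z \in A) p].

Definition Phi {R : realType} (s : R) : set {fset site} :=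
  [set A | lattice_animal A /\ s <= (#|` A|%fset)%:R].

Definition sepb (k : nat) (B : {fset site}) : bool :=
  all (fun z => all (fun w => (z == w) || (k <= distI z w)%N) (enum_fset B)) (enum_fset B).

Definition Xi (k : nat) (A : {fset site}) : set {fset site} :=
  [set B | fsubset B A /\ sepb k B].

Definition mk (k : nat) (A : {fset site}) (y : site -> bool) : nat :=
  (\max_(B <- enum_fset (fpowerset A) | sepb k B) \sum_(z <- enum_fset B) (y z : nat))%N.

(* m^k_s(y) = min over A in Phi_s of m^k(A, y) (an infimum of naturals, attained) *)
Definition mks {R : realType} (k : nat) (s : R) (y : site -> bool) : R :=
  inf [set (mk k A y)%:R | A in Phi s].

Definition cyl {T : Type} (Y : site -> T -> bool) (S : seq site) (v : site -> bool) : set T :=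
  [set w | forall z, z \in S -> Y z w = v z].

(* l-dependence: the families {Y_z : z in A} and {Y_z : z in B} are independent
   whenever d_oo(A,B) >= l; independence of the two families is expressed via
   their finite-dimensional distributions (product rule on joint cylinder events). *)
Definition l_dependent {R : realType} {d : measure_display} {T : measurableType d}
  (P : probability T R) (l : nat) (Y : site -> T -> bool) : Prop :=
  forall A B : set site,
    (forall z w, A z -> B w -> (l <= distI z w)%N) ->
    forall (SA SB : seq site) (vA vB : site -> bool),
      (forall z, z \in SA -> A z) -> (forall z, z \in SB -> B z) ->
      P (cyl Y SA vA `&` cyl Y SB vB) = (P (cyl Y SA vA) * P (cyl Y SB vB))%E.

(* Main.v *)
Require Import Defs.
From HB Require Import structures.
From mathcomp Require Import all_boot all_order all_algebra.
From mathcomp Require Import finmap.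
From mathcomp Require Import all_classical all_reals all_analysis.
From mathcomp Require Import zify ring lra.
Import Order.TTheory GRing.Theory Num.Theory.
Local Open Scope classical_set_scope.
Local Open Scope ring_scope.
Notation adj := Defs.adjacent.
Definition dir (d : 'I_4) : site :=
  match val d with 0 => (1,0) | 1 => (-1,0) | 2 => (0,1) | _ => (0,-1) end.
Definition step (z : site) (d : 'I_4) : site := (z.1 + (dir d).1, z.2 + (dir d).2).

Lemma adj_sym (a b : site) : adj a b = adj b a.
Proof. rewrite /Defs.adjacent; apply/idP/idP => /eqP H; apply/eqP; lia. Qed.

Lemma adj_step (z : site) (d : 'I_4) : adj z (step z d).
Proof.
rewrite /Defs.adjacent /step; case: d => [[|[|[|[|m]]]] Hm] //=; lia.
Qed.

Lemma adj_ex_step (a b : site) : adj a b -> exists d, step a d = b.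
Proof.
case: a b => [a1 a2] [b1 b2]; rewrite /Defs.adjacent /= => /eqP H.
have : (b1 = a1 + 1 /\ b2 = a2) \/ (b1 = a1 - 1 /\ b2 = a2) \/
       (b1 = a1 /\ b2 = a2 + 1) \/ (b1 = a1 /\ b2 = a2 - 1) by lia.
case=> [[-> ->]|[[-> ->]|[[-> ->]|[-> ->]]]].
- by exists (@Ordinal 4 0 isT); rewrite /step /= ?addr0.
- by exists (@Ordinal 4 1 isT); rewrite /step /= ?addr0.
- by exists (@Ordinal 4 2 isT); rewrite /step /= ?addr0.
- by exists (@Ordinal 4 3 isT); rewrite /step /= ?addr0.
Qed.

Lemma step_back (z : site) (d : 'I_4) : exists d', step (step z d) d' = z.
Proof. by apply: adj_ex_step; rewrite adj_sym adj_step. Qed.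
Definition org : site := (0,0).
Definition trail (w : seq 'I_4) : seq site := scanl step org w.
Definition vis w : seq site := org :: trail w.
Definition Vset w : {fset site} := [fset z in vis w]%fset.

Lemma in_Vset w z : (z \in Vset w) = (z \in vis w).
Proof. exact: in_fset. Qed.

Lemma path_scanl (x : site) w : path adj x (scanl step x w).
Proof. elim: w x => [|d w IH] x //=; by rewrite adj_step IH. Qed.

Lemma reach_from0 w x : x \in vis w ->
  exists p, [/\ path adj org p, last org p = x & all (fun z => z \in vis w) p].
Proof.
rewrite /vis inE => /orP [/eqP ->|xin]; first by exists [::].
have Hp := path_scanl org w; rewrite -/(trail w) in Hp.
case/splitPr: xin Hp => p1 p2 Hp.
exists (rcons p1 x); split.
- by move: Hp; rewrite cat_path -cats1 cat_path /= => /andP [-> /andP [-> _]].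
- by rewrite last_rcons.
- apply/allP => z; rewrite mem_rcons inE => /orP [/eqP ->|zp].
  + by rewrite in_cons mem_cat in_cons eqxx !orbT.
  + by rewrite in_cons mem_cat zp !orbT.
Qed.

Lemma rev_walk (x : site) p : path adj x p ->
  path adj (last x p) (rev (belast x p)) /\ last (last x p) (rev (belast x p)) = x.
Proof.
move=> Hp; split.
- rewrite rev_path; apply: sub_path Hp => a b; by rewrite adj_sym.
- have H : rev (x :: p) = rev (rcons (belast x p) (last x p)) by rewrite -lastI.
  rewrite rev_rcons rev_cons in H.
  by rewrite -(last_cons (last x p)) -H last_rcons.
Qed.

Lemma Vset_animal w : lattice_animal (Vset w).
Proof.
split; first by rewrite in_Vset inE eqxx.
move=> x y; rewrite !in_Vset => xin yin.
have [p [p1 p2 p3]] := @reach_from0 w x xin.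
have [q [q1 q2 q3]] := @reach_from0 w y yin.
have [r1 r2] := @rev_walk org p p1; rewrite p2 in r1 r2.
exists (rev (belast org p) ++ q); split.
- by rewrite cat_path r1 r2 q1.
- by rewrite last_cat r2 q2.
- rewrite all_cat; apply/andP; split; last first.
    by apply/allP => z /(allP q3) zin; rewrite in_Vset.
  apply/allP => z; rewrite mem_rev => /mem_belast.
  rewrite inE => /orP [/eqP ->|zp]; first by rewrite in_Vset inE eqxx.
  by rewrite in_Vset; move/allP: p3; apply.
Qed.

Lemma foldl_take_vis w i : (i <= size w)%N ->
  foldl step org (take i w) = nth org (vis w) i.
Proof.
case: i => [|j] Hj; first by rewrite take0.
by rewrite /= /trail nth_scanl.
Qed.

Lemma grow w b : (exists2 a, a \in vis w & adj a b) ->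
  exists w', size w' = (size w).+2 /\ vis w' =i b :: vis w.
Proof.
case=> a ain hab.
set i := index a (vis w).
have ilt : (i < (size w).+1)%N.
  by move: ain; rewrite -index_mem /vis /= /trail size_scanl.
have [d hd] := @adj_ex_step a b hab.
have [d' hd'] := step_back a d; rewrite hd in hd'.
exists (take i w ++ d :: d' :: drop i w); split.
  by rewrite size_cat /= size_take size_drop; case: ltnP => H; lia.
have Ha : foldl step org (take i w) = a by rewrite foldl_take_vis // nth_index.
have E : scanl step org w = scanl step org (take i w) ++ scanl step a (drop i w).
  by rewrite -{1}(cat_take_drop i w) scanl_cat Ha.
move=> z; rewrite /vis /trail scanl_cat Ha /= hd hd' E.
rewrite !in_cons !mem_cat !in_cons.
have : (z == a) ==> ((z == org) || (z \in scanl step org (take i w) ++ scanl step a (drop i w))).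
  apply/implyP => /eqP ->.
  by move: ain; rewrite /vis /trail E in_cons.
rewrite mem_cat.
by case: (z == a); case: (z == b); case: (z == org); case: (z \in scanl _ _ (take _ _)); case: (z \in scanl _ _ (drop _ _)).
Qed.

Lemma exit (Pr : pred site) (u : site) p : path adj u p -> Pr u -> ~~ Pr (last u p) ->
  exists a b, [/\ Pr a, ~~ Pr b, adj a b & b \in p].
Proof.
elim: p u => [|v p IH] u /=; first by move=> _ ->.
move=> /andP [huv hp] pu.
case pv: (Pr v) => hl.
- have [a [b [H1 H2 H3 H4]]] := IH v hp pv hl.
  by exists a, b; split => //; rewrite in_cons H4 orbT.
- by exists u, v; rewrite pv in_cons eqxx.
Qed.

Lemma Vset_nil : Vset [::] = [fset org]%fset.
Proof. by apply/fsetP => z; rewrite in_Vset in_fset1 in_cons in_nil orbF. Qed.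

Lemma growU n (A : {fset site}) : lattice_animal A -> (n < #|`A|)%N ->
  exists w, [/\ size w = (2 * n)%N, fsubset (Vset w) A & #|`Vset w| = n.+1].
Proof.
move=> [A0 Ac]; elim: n => [|n IH] Hn.
  exists [::]; rewrite Vset_nil cardfs1; split => //.
  by apply/fsubsetP => z; rewrite in_fset1 => /eqP ->.
have [w [w1 w2 w3]] := IH (ltnW Hn).
have : ~~ fsubset A (Vset w).
  apply/negP => /fsubset_leq_card; rewrite w3; lia.
case/fsubsetPn => x xA xV.
have [p [p1 p2 p3]] := Ac _ _ A0 xA.
have org_in : org \in Vset w by rewrite in_Vset in_cons eqxx.
have Hl : last org p \notin Vset w by rewrite p2.
have [a [b [Ha Hb Hab Hbp]]] := @exit (fun z => z \in Vset w) org p p1 org_in Hl.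
have [w' [s' v']] : exists w', size w' = (size w).+2 /\ vis w' =i b :: vis w.
  by apply: grow; exists a => //; rewrite -in_Vset.
have VE : Vset w' = (b |` Vset w)%fset.
  by apply/fsetP => z; rewrite in_fset1U !in_Vset v' in_cons.
exists w'; split.
- by rewrite s' w1; lia.
- rewrite VE; apply/fsubsetP => z; rewrite in_fset1U => /orP [/eqP ->|zV].
  + by move/allP: p3; apply.
  + by move/fsubsetP: w2; apply.
- by rewrite VE cardfsU1 Hb w3.
Qed.

Definition d0 : 'I_4 := @Ordinal 4 0 isT.

Lemma scanl_line (a n : nat) :
  scanl step ((a%:Z), 0) (nseq n d0) = map (fun i : nat => ((i%:Z), 0) : site) (iota a.+1 n).
Proof.
elim: n a => [|n IH] a //=.
have -> : step (a%:Z, 0) d0 = (a.+1%:Z, 0) by rewrite /step /= addr0 -addn1 PoszD.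
by rewrite IH.
Qed.

Lemma line_card n : exists w, (n.+1 <= #|`Vset w|)%N.
Proof.
exists (nseq n d0); rewrite /Vset card_fseq undup_id.
  by rewrite /vis /trail /= size_scanl size_nseq.
rewrite /vis /trail -[org]/((0%N%:Z, 0) : site) scanl_line.
rewrite -[X in uniq X]/(map (fun i : nat => ((i%:Z), 0) : site) (iota 0 n.+1)).
by rewrite map_inj_uniq ?iota_uniq // => i j [].
Qed.

Lemma sum_count (y : site -> bool) (s : seq site) : (\sum_(z <- s) (y z : nat))%N = count y s.
Proof. by elim: s => [|x s IH]; rewrite ?big_nil ?big_cons ?IH. Qed.

Lemma mk_ge k (A B : {fset site}) (y : site -> bool) :
  fsubset B A -> sepb k B -> (count y (enum_fset B) <= mk k A y)%N.
Proof.
move=> BA sB; rewrite /mk -sum_count.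
by apply: leq_bigmax_seq => //; rewrite fpowersetE.
Qed.

Lemma mk_mono k (A A' : {fset site}) (y : site -> bool) :
  fsubset A A' -> (mk k A y <= mk k A' y)%N.
Proof.
move=> AA'; rewrite {1}/mk; apply/bigmax_leqP_seq => B Bin sB.
rewrite sum_count; apply: mk_ge => //; apply: fsubset_trans AA'.
by move: Bin; rewrite fpowersetE.
Qed.

Lemma mk_dep k (A : {fset site}) (y y' : site -> bool) :
  {in A, y =1 y'} -> mk k A y = mk k A y'.
Proof.
move=> H; rewrite /mk big_seq_cond [RHS]big_seq_cond; apply: eq_bigr => B /andP [Bin _].
have BA : fsubset B A.
  by move: Bin; rewrite fpowersetE.
apply: eq_big_seq => z zB; congr nat_of_bool; apply: H.
by move/fsubsetP: BA; apply.
Qed.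

Definition cls (K : nat) (z : site) : 'I_K.+1 * 'I_K.+1 :=
  (inord `|(z.1 %% K.+1)%Z|%N, inord `|(z.2 %% K.+1)%Z|%N).

Lemma mod_eq_sep (K : nat) (a b : int) : `|(a %% K.+1)%Z|%N = `|(b %% K.+1)%Z|%N -> a != b ->
  (K.+1 <= `|a - b|%N)%N.
Proof.
move=> H ab.
have H1 : (a %% K.+1)%Z = (b %% K.+1)%Z.
  have h1 := @modz_ge0 a K.+1 isT; have h2 := @modz_ge0 b K.+1 isT.
  by rewrite -(gez0_abs h1) -(gez0_abs h2) H.
have : (K.+1%:Z %| a - b)%Z by rewrite -eqz_mod_dvd; apply/eqP.
rewrite dvdzE /= => /dvdn_leq; apply; rewrite absz_gt0 subr_eq0 //.
Qed.

Lemma cls_sep (K : nat) (z w : site) : cls K z = cls K w -> z != w -> (K.+1 <= distI z w)%N.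
Proof.
case: z w => [z1 z2] [w1 w2]; rewrite /cls /distI /= => [[]].
have hb (a : int) : (`|(a %% K.+1)%Z|%N < K.+1)%N.
  have h1 := @modz_ge0 a K.+1 isT; have h2 := @ltz_pmod a K.+1 isT.
  by rewrite -ltz_nat gez0_abs.
move=> /(congr1 val); rewrite /= !inordK // => H1.
move=> /(congr1 val); rewrite /= !inordK // => H2.
case: (eqVneq z1 w1) => [e1|n1].
  case: (eqVneq z2 w2) => [e2|n2]; first by rewrite e1 e2 eqxx.
  by move=> _; rewrite leq_max (@mod_eq_sep K z2 w2 H2 n2) orbT.
by move=> _; rewrite leq_max (@mod_eq_sep K z1 w1 H1 n1).
Qed.

Lemma partition_count (C : finType) (f : site -> C) (Pr : pred site) (s : seq site) :
  count Pr s = (\sum_(c : C) count (fun z => Pr z && (f z == c)) s)%N.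
Proof.
elim: s => [|x s IH] /=; first by rewrite big1.
rewrite big_split /= -IH; congr (_ + _)%N.
rewrite (bigD1 (f x)) //= eqxx andbT big1 ?addn0 // => c cn.
by rewrite eq_sym (negbTE cn) andbF.
Qed.

Lemma enum_fseq_perm (s : seq site) : uniq s -> perm_eq (enum_fset [fset z in s]%fset) s.
Proof.
move=> us; apply: uniq_perm; [exact: fset_uniq | exact: us | ].
by move=> z; rewrite -[_ \in enum_fset _]/(_ \in [fset z in s]%fset) in_fset.
Qed.

Lemma mk_k (K : nat) (A : {fset site}) (y : site -> bool) :
  (count y (enum_fset A) <= K.+1 * K.+1 * mk K.+1 A y)%N.
Proof.
rewrite (@partition_count _ (cls K)).
have -> : (K.+1 * K.+1 * mk K.+1 A y = \sum_(c : 'I_K.+1 * 'I_K.+1) mk K.+1 A y)%N.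
  by rewrite sum_nat_const card_prod card_ord.
apply: leq_sum => c _.
set s := [seq z <- enum_fset A | cls K z == c].
have us : uniq s by rewrite filter_uniq // fset_uniq.
have -> : count (fun z => y z && (cls K z == c)) (enum_fset A) = count y (enum_fset [fset z in s]%fset).
  by rewrite (permP (@enum_fseq_perm s us)) count_filter.
apply: mk_ge.
  apply/fsubsetP => z; rewrite in_fset mem_filter => /andP [_ ->] //.
apply/allP => z; rewrite -[_ \in enum_fset _]/(_ \in [fset z in s]%fset) in_fset mem_filter => /andP [/eqP zc _].
apply/allP => w; rewrite -[_ \in enum_fset _]/(_ \in [fset z in s]%fset) in_fset mem_filter => /andP [/eqP wc _].
case: (eqVneq z w) => //= zw; apply: cls_sep => //; by rewrite zc wc.
Qed.

Lemma l_part (L : nat) (s : seq site) : uniq s ->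
  exists S : seq site, [/\ uniq S, {subset S <= s},
    (forall z w, z \in S -> w \in S -> z != w -> (L.+1 <= distI z w)%N) &
    (size s <= L.+1 * L.+1 * size S)%N].
Proof.
move=> us.
pose F (c : 'I_L.+1 * 'I_L.+1) := count (fun z => cls L z == c) s.
pose c0 : 'I_L.+1 * 'I_L.+1 := (ord0, ord0).
case: (@arg_maxnP _ c0 predT F isT) => c _ Hc.
exists [seq z <- s | cls L z == c]; split.
- by rewrite filter_uniq.
- by move=> z; rewrite mem_filter => /andP [].
- move=> z w; rewrite !mem_filter => /andP [/eqP zc _] /andP [/eqP wc _] zw.
  by apply: cls_sep => //; rewrite zc wc.
rewrite size_filter -/(F c) -(count_predT s) (@partition_count _ (cls L)).
have -> : (L.+1 * L.+1 * F c = \sum_(c' : 'I_L.+1 * 'I_L.+1) F c)%N.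
  by rewrite sum_nat_const card_prod card_ord.
by apply: leq_sum => c' _; apply: Hc.
Qed.

Lemma sub_bigsetU (T' : Type) (I : eqType) (r : seq I) (Pr : pred I) (F : I -> set T') i :
  i \in r -> Pr i -> F i `<=` \big[setU/set0]_(j <- r | Pr j) F j.
Proof.
elim: r => [|j r IH] //; rewrite in_cons big_cons => /orP [/eqP <-|ir] Pi.
  by rewrite Pi; apply: subsetUl.
case: ifP => _; last exact: IH.
by apply: subset_trans (IH ir Pi) _; apply: subsetUr.
Qed.

Section Prob.
Variables (R : realType) (d : measure_display) (T : measurableType d) (P : probability T R).
Variable (Yn : site -> T -> bool).
Hypothesis hY : forall z, measurable [set w | Yn z w].

Lemma meas_dep (S : seq site) (g : (site -> bool) -> bool) :
  (forall y y', {in S, y =1 y'} -> g y = g y') -> measurable [set w | g (fun z => Yn z w)].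
Proof.
elim: S g => [|z S IH] g Hg.
  have -> : [set w | g (fun z => Yn z w)] = if g (fun _ => true) then setT else set0.
    apply/seteqP; split => w /=.
      by rewrite (Hg _ (fun _ => true)) // => ->.
    by case: ifP => // h _; rewrite (Hg _ (fun _ => true)).
  by case: ifP.
pose gb (b : bool) y := g (fun u => if u == z then b else y u).
have Hgb b : forall y y', {in S, y =1 y'} -> gb b y = gb b y'.
  move=> y y' H; rewrite /gb; apply: Hg => u; rewrite in_cons => /orP [/eqP ->|uS].
    by rewrite eqxx.
  by case: ifP => // _; apply: H.
have -> : [set w | g (fun z => Yn z w)] =
  ([set w | Yn z w] `&` [set w | gb true (fun z => Yn z w)]) `|`
  (~` [set w | Yn z w] `&` [set w | gb false (fun z => Yn z w)]).
  apply/seteqP; split => w /=.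
    have E : g (fun z0 => Yn z0 w) = gb (Yn z w) (fun z0 => Yn z0 w).
      by rewrite /gb; apply: Hg => u _; case: eqP => // ->.
    by rewrite E; case: (Yn z w) => h; [left | right].
  have E : g (fun z0 => Yn z0 w) = gb (Yn z w) (fun z0 => Yn z0 w).
    by rewrite /gb; apply: Hg => u _; case: eqP => // ->.
  by rewrite E; case => [] [h1 h2] //; move: h1; [move=> -> | move/negP/negbTE ->].
apply: measurableU; apply: measurableI.
- exact: hY.
- exact: IH (Hgb true).
- exact: measurableC (hY z).
- exact: IH (Hgb false).
Qed.

Lemma cyl_meas (S : seq site) v : measurable (cyl Yn S v).
Proof.
have -> : cyl Yn S v = [set w | all (fun z => Yn z w == v z) S].
  by apply/seteqP; split => w /=; [move=> H; apply/allP => z zS; rewrite H | move/allP => H z zS; apply/eqP; apply: H].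
apply: (@meas_dep S (fun y => all (fun z => y z == v z) S)) => y y' H; apply: eq_in_all => z zS; by rewrite H.
Qed.

Lemma union_bound (I : Type) (r : seq I) (Pr : pred I) (F : I -> set T) :
  (forall i, measurable (F i)) ->
  (P (\big[setU/set0]_(i <- r | Pr i) F i) <= \sum_(i <- r | Pr i) P (F i))%E.
Proof.
move=> mF; elim: r => [|i r IH]; first by rewrite !big_nil measure0.
rewrite !big_cons; case: ifP => // _.
apply: le_trans (measureU2 _ _ _) _ => //; first exact: bigsetU_measurable.
by apply: leeD.
Qed.


Lemma indep_prod (l : nat) (hdep : l_dependent P l Yn) (q : R)
  (hq : forall z, (P (cyl Yn [:: z] (fun _ => false)) <= q%:E)%E) (S : seq site) :
  uniq S -> (forall z w, z \in S -> w \in S -> z != w -> (l <= distI z w)%N) ->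
  (P (cyl Yn S (fun _ => false)) <= (q ^+ size S)%:E)%E.
Proof.
elim: S => [|z S IH] /=.
  move=> _ _; have -> : cyl Yn [::] (fun _ => false) = setT by apply/seteqP; split.
  by rewrite probability_setT expr0.
move=> /andP [zS uS] Hsep.
have -> : cyl Yn (z :: S) (fun _ => false) = cyl Yn [:: z] (fun _ => false) `&` cyl Yn S (fun _ => false).
  apply/seteqP; split => w /=.
    move=> H; split => u uin; apply: H; rewrite in_cons ?uin ?orbT //.
    by move: uin; rewrite inE => ->.
  move=> [H1 H2] u; rewrite in_cons => /orP [/eqP ->|uS1]; last exact: H2.
  by apply: H1; rewrite inE.
have Hs : forall z' w, [set z] z' -> [set w | w \in S] w -> (l <= distI z' w)%N.
  move=> z' w /= -> wS; apply: Hsep; rewrite ?in_cons ?eqxx ?wS ?orbT //.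
  by apply/eqP => e; move: zS; rewrite e wS.
have h1 : forall u, u \in [:: z] -> [set z] u by move=> u; rewrite inE => /eqP.
have h2 : forall u, u \in S -> [set w | w \in S] u by [].
rewrite (hdep _ _ Hs [:: z] S (fun _ => false) (fun _ => false) h1 h2).
have q0 : (0 <= q%:E)%E by apply: le_trans (hq z); exact: measure_ge0.
rewrite exprS EFinM; apply: lee_pmul.
- exact: measure_ge0.
- exact: measure_ge0.
- exact: hq.
- apply: IH => // a b aS bS; apply: Hsep; by rewrite in_cons ?aS ?bS orbT.
Qed.


Lemma core (l : nat) (hdep : l_dependent P l Yn) (q : R)
  (hq : forall z, (P (cyl Yn [:: z] (fun _ => false)) <= q%:E)%E) (S : seq site) :
  uniq S -> (forall z w, z \in S -> w \in S -> z != w -> (l <= distI z w)%N) ->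
  (P [set w | (2 * count (fun z => Yn z w) S < size S)%N] <=
   (\sum_(m : (size S).-tuple bool | (size S < 2 * count id m)%N) q ^+ count id m)%:E)%E.
Proof.
move=> uS Hsep.
have mE : measurable [set w | (2 * count (fun z => Yn z w) S < size S)%N].
  apply: (@meas_dep S (fun y => (2 * count y S < size S)%N)) => y y' H.
  by rewrite (eq_in_count H).
set U := \big[setU/set0]_(m : (size S).-tuple bool | (size S < 2 * count id m)%N)
          cyl Yn (mask m S) (fun _ => false).
have mU : measurable U by apply: bigsetU_measurable => m _; exact: cyl_meas.
apply: (@le_trans _ _ (P U)).
  apply: le_measure; rewrite ?inE //.
  move=> w /= Hw; rewrite /U.
  pose m := map_tuple (fun z => ~~ Yn z w) (in_tuple S).
  have Hm : (size S < 2 * count id m)%N.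
    rewrite /m /= count_map.
    have E : count (fun z => ~~ Yn z w) S = (size S - count (fun z => Yn z w) S)%N.
      by rewrite -(count_predC (fun z => Yn z w) S) addKn.
    have -> : count (preim (fun z => ~~ Yn z w) id) S = count (fun z => ~~ Yn z w) S by [].
    rewrite E; move: Hw; set c := count _ S; lia.
  have : cyl Yn (mask m S) (fun _ => false) w.
    move=> z; rewrite /m /= -filter_mask mem_filter => /andP [].
    by case: (Yn z w).
  by apply: (@sub_bigsetU _ _ (index_enum _) _ _ m) => //; rewrite mem_index_enum.
apply: le_trans.
  apply: union_bound => m; exact: cyl_meas.
rewrite -sumEFin; apply: lee_sum => m Hm.
rewrite -(size_mask (m := m) (s := S)); last by rewrite size_tuple.
apply: (@indep_prod l hdep q hq); first exact: mask_uniq.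
by move=> z w /mem_mask zS /mem_mask wS; apply: Hsep.
Qed.

End Prob.

Lemma F_bound (R : realType) (d : measure_display) (T : measurableType d) (P : probability T R)
  (Yn : site -> T -> bool) (hY : forall z, measurable [set w | Yn z w])
  (l k : nat) (hl : (0 < l)%N) (hk : (0 < k)%N) (hdep : l_dependent P l Yn)
  (hq : forall z, (P (cyl Yn [:: z] (fun _ => false)) <= (((64:R)^-1) ^+ (2 * l * l))%:E)%E)
  (s : R) (V : {fset site}) : s <= (#|`V|)%:R ->
  (P [set w | ((mk k V (fun z => Yn z w))%:R < ((2 * k * k * l * l)%:R)^-1 * s)%R] <=
   (((32:R)^-1) ^+ #|`V|)%:E)%E.
Proof.
move=> sV.
have [S [uS SV Ssep Ssz]] := @l_part l.-1 (enum_fset V) (fset_uniq _).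
rewrite prednK // in Ssep Ssz.
have SzV : (size S <= #|`V|)%N by apply: uniq_leq_size.
set q := ((64:R)^-1) ^+ (2 * l * l).
apply: (@le_trans _ _ (P [set w | (2 * count (fun z => Yn z w) S < size S)%N])).
  apply: le_measure; rewrite ?inE.
  - apply: (@meas_dep d T Yn hY (enum_fset V) (fun y => (mk k V y)%:R < ((2 * k * k * l * l)%:R)^-1 * s)).
    by move=> y y' H; rewrite (@mk_dep k V y y' H).
  - apply: (@meas_dep d T Yn hY S (fun y => (2 * count y S < size S)%N)).
    by move=> y y' H; rewrite (eq_in_count H).
  move=> w /= Hw.
  set y := fun z => Yn z w.
  have c1 : (count y S <= count y (enum_fset V))%N.
    rewrite -!size_filter; apply: uniq_leq_size; first exact: filter_uniq.
    by move=> z; rewrite !mem_filter => /andP [-> /SV ->].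
  have c2 := @mk_k k.-1 V y; rewrite prednK // in c2.
  rewrite -(ltr_nat R) natrM.
  move: Hw; rewrite ltr_pdivlMl ?ltr0n ?muln_gt0 ?hk ?hl // => Hw.
  have h1 : ((count y S)%:R : R) <= (k * k)%:R * (mk k V y)%:R.
    by rewrite -natrM ler_nat; apply: leq_trans c1 c2.
  have h2 : ((#|`V|)%:R : R) <= (l * l)%:R * (size S)%:R by rewrite -natrM ler_nat.
  have L2 : (0 : R) < (l * l)%:R by rewrite ltr0n muln_gt0 hl.
  have E : ((2 * k * k * l * l)%:R : R) = 2 * (k * k)%:R * (l * l)%:R.
    by rewrite !natrM; ring.
  rewrite E in Hw.
  set c := ((count y S)%:R : R) in h1 *; set m := ((mk k V y)%:R : R) in h1 Hw.
  set v := ((#|`V|)%:R : R) in h2 sV; set z := ((size S)%:R : R) in h2 *.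
  set K2 := ((k * k)%:R : R) in h1 Hw; set L2' := ((l * l)%:R : R) in h2 Hw L2.
  nra.
apply: le_trans (@core R d T P Yn hY l hdep _ hq S uS Ssep) _.
rewrite lee_fin.
have i0 : (0 : R) <= 64^-1 by rewrite invr_ge0.
have i1 : (64^-1 : R) <= 1 by rewrite invf_le1 // ?ler1n ?ltr0n.
apply: (@le_trans _ _ (\sum_(m : (size S).-tuple bool | (size S < 2 * count id m)%N) (64^-1 : R) ^+ #|`V|)).
  apply: ler_sum => m Hm; rewrite /q -exprM; apply: ler_wiXn2l => //.
  apply: leq_trans Ssz _.
  nia.
rewrite sumr_const.
apply: (@le_trans _ _ ((64^-1 : R) ^+ #|`V| *+ (2 ^ #|`V|)%N)).
  apply: ler_wpMn2l; first exact: exprn_ge0.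
  apply: leq_trans (max_card _) _; rewrite card_tuple card_bool.
  by rewrite leq_exp2l.
rewrite -mulr_natr natrX -exprMn.
have -> : (64^-1 : R) * 2 = 32^-1 by field.
by [].
Qed.

Lemma bigsetU_ex (T' : Type) (I : eqType) (r : seq I) (Pr : pred I) (F : I -> set T') x :
  (\big[setU/set0]_(j <- r | Pr j) F j) x -> exists j, [/\ j \in r, Pr j & F j x].
Proof.
elim: r => [|j r IH]; first by rewrite big_nil.
rewrite big_cons; case: ifP => Pj.
  case=> [Fj|H]; first by exists j; rewrite in_cons eqxx.
  by have [i [i1 i2 i3]] := IH H; exists i; rewrite in_cons i1 orbT.
by move/IH => [i [i1 i2 i3]]; exists i; rewrite in_cons i1 orbT.
Qed.

Theorem lemma2p4 (R : realType) (l : nat) (hl : (1 <= l)%N) :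
  exists p0 : R, 0 < p0 < 1 /\
  forall (d : measure_display) (T : measurableType d) (P : probability T R)
         (I : Type) (Y : I -> site -> T -> bool),
    (forall n z, measurable [set w | Y n z w]) ->
    (forall n, l_dependent P l (Y n)) ->
    (p0%:E < ereal_inf (range (fun nz : I * site => P [set w | Y nz.1 nz.2 w])))%E ->
    forall k : nat, (1 <= k)%N ->
      exists b3 b4 : R, 0 < b3 /\ 0 < b4 /\
        forall (n : I) (s : R), 1 <= s ->
          (P [set w | (mks k s (fun z => Y n z w) < b3 * s)%R]
             <= (expR (- (b4 * s)))%:E)%E.
Proof.
set q0 : R := ((64:R)^-1) ^+ (2 * l * l).
have q0pos : 0 < q0 by rewrite exprn_gt0 // invr_gt0.
have q0lt1 : q0 < 1.
  rewrite exprn_ilt1 ?invr_ge0 ?invf_lt1 ?ltr0n ?ltr1n //; lia.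
exists (1 - q0); split; first by apply/andP; split; lra.
move=> d T P I Y hY hdep hinf k hk.
exists ((2 * k * k * l * l)%:R)^-1, (ln 2); split.
  by rewrite invr_gt0 ltr0n !muln_gt0 hk hl.
split; first by rewrite ln_gt0 // ltr1n.
move=> n s hs.
set Yn := Y n.
have hq : forall z, (P (cyl Yn [:: z] xpred0) <= q0%:E)%E.
  move=> z.
  have -> : cyl Yn [:: z] xpred0 = ~` [set w | Yn z w].
    apply/seteqP; split => w /=.
      by move=> H; rewrite (H z) ?inE.
    by move=> /negP/negbTE H u; rewrite inE => /eqP ->.
  rewrite probability_setC; last exact: hY n z.
  have H1 : ((1 - q0)%:E < P [set w | Yn z w])%E.
    apply: lt_le_trans hinf _; apply: ereal_inf_lbound; by exists (n, z).
  have H2 := probability_le1 P (hY n z).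
  have H3 := measure_ge0 P [set w | Yn z w].
  move: H1 H2 H3; case: (P [set w | Yn z w]) => [r| |] //.
  rewrite !lte_fin !lee_fin => A B C; lra.
set b3 : R := ((2 * k * k * l * l)%:R)^-1.
pose M := `|Num.ceil s|%N.
have c0 : 0 <= Num.ceil s by rewrite ceil_ge0; lra.
have MZ : (M%:Z) = Num.ceil s by rewrite /M; lia.
have hM : s <= M%:R by rewrite -[M%:R]/((M%:Z)%:~R) MZ; exact: ceil_ge.
have hMle : forall a : nat, s <= a%:R -> (M <= a)%N.
  move=> a sa; have : Num.ceil s <= a%:Z by rewrite ceil_le_int.
  by rewrite -MZ lez_nat.
have hM1 : (1 <= M)%N by rewrite -(ler_nat R); lra.
have [w0 Hw0] := line_card M.-1; rewrite prednK // in Hw0.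
pose F (w : (2 * M.-1).-tuple 'I_4) : set T :=
  if pselect (Phi s (Vset w)) then [set om | ((mk k (Vset w) (fun z => Yn z om))%:R < b3 * s)%R]
  else set0.
have EU : [set om | (mks k s (fun z => Yn z om) < b3 * s)%R] =
          \big[setU/set0]_(w : (2 * M.-1).-tuple 'I_4) F w.
  apply/seteqP; split => om /=.
    move=> Hom; rewrite /mks in Hom.
    set SS := [set (mk k A (fun z => Yn z om))%:R | A in Phi s] in Hom.
    have ne : SS !=set0.
      exists (mk k (Vset w0) (fun z => Yn z om))%:R; exists (Vset w0) => //; split.
        exact: Vset_animal.
      by apply: le_trans hM _; rewrite ler_nat.
    have [x [A [animA sA] <-] xlt] := inf_lt ne Hom.
    have MA : (M.-1 < #|`A|)%N by rewrite prednK //; apply: hMle.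
    have [w [w1 w2 w3]] := @growU M.-1 A animA MA.
    have w1' : size w == (2 * M.-1)%N by apply/eqP.
    apply: (@sub_bigsetU _ _ _ _ _ (Tuple w1')); first by rewrite mem_index_enum.
      by [].
    rewrite /F; case: pselect => [PV|nPV] /=.
      by apply: le_lt_trans xlt; rewrite ler_nat; apply: mk_mono.
    by exfalso; apply: nPV; split; [exact: Vset_animal | rewrite /= w3 prednK].
  move=> Hom; have [wt [_ _ Hf]] := @bigsetU_ex _ _ _ _ _ _ Hom.
  move: Hf; rewrite /F; case: pselect => // PV /= Hlt.
  rewrite /mks; apply: le_lt_trans Hlt; apply: ge_inf; last by exists (Vset wt).
  by exists 0 => x [A _ <-]; exact: ler0n.
rewrite EU.
have mF : forall w, measurable (F w).
  move=> w; rewrite /F; case: pselect => _ /=; last exact: measurable0.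
  apply: (@meas_dep d T Yn (hY n) (enum_fset (Vset w))
            (fun y => ((mk k (Vset w) y)%:R < b3 * s)%R)).
  by move=> y y' H; rewrite (@mk_dep k (Vset w) y y' H).
apply: le_trans; first exact: union_bound.
have i0 : (0 : R) <= 32^-1 by rewrite invr_ge0.
have i1 : (32^-1 : R) <= 1 by rewrite invf_le1 // ?ler1n ?ltr0n.
apply: (@le_trans _ _ (\sum_(w : (2 * M.-1).-tuple 'I_4) (((32:R)^-1) ^+ M)%:E)).
  apply: lee_sum => w _; rewrite /F; case: pselect => [[_ PV]|_] /=.
    apply: le_trans.
      apply: (@F_bound R d T P Yn (hY n) l k hl hk (hdep n) hq s (Vset w) PV).
    by rewrite lee_fin; apply: ler_wiXn2l => //; apply: hMle.
  by rewrite measure0 lee_fin exprn_ge0.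
rewrite sumEFin lee_fin sumr_const card_tuple card_ord.
have e2 : expR (- ln (2:R)) = 2^-1 by rewrite expRN lnK // posrE.
have HM : expR (- (ln (2:R) * M%:R)) <= expR (- (ln 2 * s)).
  rewrite ler_expR lerN2; apply: ler_wpM2l => //.
  by apply: ltW; rewrite ln_gt0 // ltr1n.
apply: le_trans HM.
rewrite -mulNr mulrC expRM_natl e2.
apply: (@le_trans _ _ ((32^-1 : R) ^+ M * (16 : R) ^+ M)).
  rewrite -[_ *+ 4 ^ _]mulr_natr.
  apply: ler_wpM2l; first exact: exprn_ge0.
  rewrite -natrX ler_nat expnM.
  by rewrite leq_exp2l //; lia.
rewrite -exprMn.
have -> : (32^-1 : R) * 16 = 2^-1 by field.
by [].
Qed.
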